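(* Let $\mathcal{H}$ be a complex Hilbert space and let $R,S\in\mathbb{B}(\mathcal{H})$ be invertible (with bounded inverses) such that $D(R)\le\|R^{-1}\|^{-2}$ and $D(S)\le\|S^{-1}\|^{-2}$. Then $\omega(RS)\le 2\,\omega(R)\,\omega(S)$.
   Context: $\mathbb{B}(\mathcal{H})$ denotes the bounded linear operators on $\mathcal{H}$. $\omega(A)=\sup\{|\langle Ax,x\rangle| : \|x\|=1\}$ is the numerical radius, and for $A\in\mathbb{B}(\mathcal{H})$, $D(A)=2\min(\|A_1\|^2,\|A_2\|^2)$ where $A_1=\frac{A+A^*}{2}$, $A_2=\frac{A-A^*}{2i}$. *)

(* Defs.v *)
From Stdlib Require Import Reals Lra ClassicalEpsilon.
Open Scope R_scope.

Record Cplx := mkC { re : R; im : R }.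
Definition C0 : Cplx := mkC 0 0.
Definition C1 : Cplx := mkC 1 0.
Definition Cadd (a b : Cplx) : Cplx := mkC (re a + re b) (im a + im b).
Definition Cmul (a b : Cplx) : Cplx :=
  mkC (re a * re b - im a * im b) (re a * im b + im a * re b).
Definition Cconj (a : Cplx) : Cplx := mkC (re a) (- im a).
Definition Cmod (a : Cplx) : R := sqrt (re a ^ 2 + im a ^ 2).
Definition RtoC (r : R) : Cplx := mkC r 0.

Record HilbertSpace := {
  hcar :> Type;
  hzero : hcar;
  hadd : hcar -> hcar -> hcar;
  hopp : hcar -> hcar;
  hscal : Cplx -> hcar -> hcar;
  hinner : hcar -> hcar -> Cplx;
  hadd_assoc : forall x y z, hadd x (hadd y z) = hadd (hadd x y) z;
  hadd_comm : forall x y, hadd x y = hadd y x;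
  hadd_0 : forall x, hadd hzero x = x;
  hadd_opp : forall x, hadd x (hopp x) = hzero;
  hscal_assoc : forall a b x, hscal a (hscal b x) = hscal (Cmul a b) x;
  hscal_1 : forall x, hscal C1 x = x;
  hscal_addr : forall a x y, hscal a (hadd x y) = hadd (hscal a x) (hscal a y);
  hscal_addl : forall a b x, hscal (Cadd a b) x = hadd (hscal a x) (hscal b x);
  hinner_addl : forall x y z, hinner (hadd x y) z = Cadd (hinner x z) (hinner y z);
  hinner_scall : forall a x y, hinner (hscal a x) y = Cmul a (hinner x y);
  hinner_sym : forall x y, hinner y x = Cconj (hinner x y);
  hinner_pos : forall x, 0 <= re (hinner x x);
  hinner_def : forall x, re (hinner x x) = 0 -> x = hzero;
  hcomplete : forall u : nat -> hcar,
    (forall eps, eps > 0 -> exists N, forall m n, (N <= m)%nat -> (N <= n)%nat ->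
        sqrt (re (hinner (hadd (u m) (hopp (u n))) (hadd (u m) (hopp (u n))))) < eps) ->
    exists l, forall eps, eps > 0 -> exists N, forall n, (N <= n)%nat ->
        sqrt (re (hinner (hadd (u n) (hopp l)) (hadd (u n) (hopp l)))) < eps
}.

Arguments hzero {h}. Arguments hadd {h}. Arguments hopp {h}.
Arguments hscal {h}. Arguments hinner {h}.

Definition hnorm {H : HilbertSpace} (x : H) : R := sqrt (re (hinner x x)).

(* supremum of a set of reals (0 if it has no least upper bound) *)
Definition Rsup (E : R -> Prop) : R :=
  match excluded_middle_informative (exists l, is_lub E l) with
  | left h => proj1_sig (constructive_indefinite_description _ h)
  | right _ => 0
  end.

Definition is_linear {H : HilbertSpace} (A : H -> H) : Prop :=
  (forall x y, A (hadd x y) = hadd (A x) (A y)) /\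
  (forall a x, A (hscal a x) = hscal a (A x)).

Definition is_bounded {H : HilbertSpace} (A : H -> H) : Prop :=
  is_linear A /\ exists M, forall x, hnorm (A x) <= M * hnorm x.

Definition is_adjoint {H : HilbertSpace} (A Astar : H -> H) : Prop :=
  forall x y, hinner (A x) y = hinner x (Astar y).

Definition is_inverse {H : HilbertSpace} (A Ainv : H -> H) : Prop :=
  is_bounded Ainv /\ (forall x, A (Ainv x) = x) /\ (forall x, Ainv (A x) = x).

Definition opnorm {H : HilbertSpace} (A : H -> H) : R :=
  Rsup (fun r => exists x : H, hnorm x <= 1 /\ r = hnorm (A x)).

Definition numrad {H : HilbertSpace} (A : H -> H) : R :=
  Rsup (fun r => exists x : H, hnorm x = 1 /\ r = Cmod (hinner (A x) x)).

Definition opcomp {H : HilbertSpace} (A B : H -> H) : H -> H := fun x => A (B x).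

(* Cartesian decomposition, given the adjoint Astar of A:
   A1 = (A + Astar)/2 ,  A2 = (A - Astar)/(2i) ; note 1/(2i) = -i/2 *)
Definition re_part {H : HilbertSpace} (A Astar : H -> H) : H -> H :=
  fun x => hscal (RtoC (1/2)) (hadd (A x) (Astar x)).
Definition im_part {H : HilbertSpace} (A Astar : H -> H) : H -> H :=
  fun x => hscal (mkC 0 (-(1/2))) (hadd (A x) (hopp (Astar x))).

Definition Dfun {H : HilbertSpace} (A Astar : H -> H) : R :=
  2 * Rmin (opnorm (re_part A Astar) ^ 2) (opnorm (im_part A Astar) ^ 2).

(* Main.v *)
Require Import Defs.
From Stdlib Require Import Reals Lra Psatz ClassicalEpsilon Classical.
Open Scope R_scope.

Lemma Ceq (a b : Cplx) : re a = re b -> im a = im b -> a = b.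
Proof. destruct a, b; simpl; intros; subst; reflexivity. Qed.

Definition n2 {X : HilbertSpace} (x : X) := re (hinner x x).
Definition sc {X : HilbertSpace} (r : R) (x : X) : X := hscal (RtoC r) x.

Lemma im_self {X : HilbertSpace} (x : X) : im (hinner x x) = 0.
Proof. pose proof (f_equal im (hinner_sym X x x)) as E. simpl in E. lra. Qed.

Lemma n2_pos {X : HilbertSpace} (x : X) : 0 <= n2 x.
Proof. apply hinner_pos. Qed.

Lemma re_sym {X : HilbertSpace} (x y : X) : re (hinner y x) = re (hinner x y).
Proof. rewrite hinner_sym. reflexivity. Qed.

Lemma im_sym {X : HilbertSpace} (x y : X) : im (hinner y x) = - im (hinner x y).
Proof. rewrite hinner_sym. reflexivity. Qed.

Lemma inner_addr {X : HilbertSpace} (x y z : X) :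
  hinner x (hadd y z) = Cadd (hinner x y) (hinner x z).
Proof.
  rewrite (hinner_sym X (hadd y z) x), hinner_addl, (hinner_sym X x y), (hinner_sym X x z).
  apply Ceq; simpl; lra.
Qed.

Lemma inner_scalr {X : HilbertSpace} a (x y : X) :
  hinner x (hscal a y) = Cmul (Cconj a) (hinner x y).
Proof.
  rewrite (hinner_sym X (hscal a y) x), hinner_scall, (hinner_sym X x y).
  apply Ceq; simpl; ring.
Qed.

Lemma scal_zero {X : HilbertSpace} (x : X) : hscal C0 x = hzero.
Proof.
  set (z := hscal C0 x).
  assert (E : z = hadd z z).
  { unfold z. rewrite <- hscal_addl. f_equal. apply Ceq; simpl; lra. }
  rewrite <- (hadd_opp X z). rewrite E at 2. rewrite <- hadd_assoc, hadd_opp.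
  rewrite hadd_comm, hadd_0. reflexivity.
Qed.

Lemma opp_sc {X : HilbertSpace} (x : X) : hopp x = sc (-1) x.
Proof.
  assert (E : hadd x (sc (-1) x) = hzero).
  { unfold sc. rewrite <- (hscal_1 X x) at 1. rewrite <- hscal_addl.
    rewrite <- (scal_zero x). f_equal. apply Ceq; simpl; lra. }
  rewrite <- (hadd_0 X (sc (-1) x)). rewrite <- (hadd_opp X x) at 1.
  rewrite (hadd_comm X x (hopp x)), <- hadd_assoc, E, hadd_comm, hadd_0. reflexivity.
Qed.

Lemma inner_zero_r {X : HilbertSpace} (x : X) : hinner x hzero = C0.
Proof.
  rewrite <- (scal_zero (@hzero X)), inner_scalr. apply Ceq; simpl; ring.
Qed.

Lemma inner_zero_l {X : HilbertSpace} (x : X) : hinner hzero x = C0.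
Proof.
  rewrite <- (scal_zero (@hzero X)), hinner_scall. apply Ceq; simpl; ring.
Qed.

Lemma re_scall {X : HilbertSpace} c (u v : X) :
  re (hinner (hscal c u) v) = re c * re (hinner u v) - im c * im (hinner u v).
Proof. rewrite hinner_scall. reflexivity. Qed.

Lemma re_sc_l {X : HilbertSpace} r (u v : X) :
  re (hinner (sc r u) v) = r * re (hinner u v).
Proof. unfold sc. rewrite re_scall. simpl. ring. Qed.

Lemma re_sc_r {X : HilbertSpace} r (u v : X) :
  re (hinner u (sc r v)) = r * re (hinner u v).
Proof. rewrite re_sym, re_sc_l, re_sym. reflexivity. Qed.

Lemma n2_scal {X : HilbertSpace} c (w : X) :
  n2 (hscal c w) = (re c ^ 2 + im c ^ 2) * n2 w.
Proof.
  unfold n2. rewrite hinner_scall, inner_scalr. simpl. rewrite (im_self w). ring.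
Qed.

Lemma n2_sc {X : HilbertSpace} r (w : X) : n2 (sc r w) = r ^ 2 * n2 w.
Proof. unfold sc. rewrite n2_scal. simpl. ring. Qed.

Lemma re_addl {X : HilbertSpace} (u v w : X) :
  re (hinner (hadd u v) w) = re (hinner u w) + re (hinner v w).
Proof. rewrite hinner_addl. reflexivity. Qed.

Lemma re_addr {X : HilbertSpace} (u v w : X) :
  re (hinner w (hadd u v)) = re (hinner w u) + re (hinner w v).
Proof. rewrite inner_addr. reflexivity. Qed.

Lemma im_addl {X : HilbertSpace} (u v w : X) :
  im (hinner (hadd u v) w) = im (hinner u w) + im (hinner v w).
Proof. rewrite hinner_addl. reflexivity. Qed.

Lemma n2_add {X : HilbertSpace} (u v : X) :
  n2 (hadd u v) = n2 u + 2 * re (hinner u v) + n2 v.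
Proof.
  unfold n2. rewrite re_addl, !re_addr, (re_sym u v). ring.
Qed.

Lemma CS_re {X : HilbertSpace} (x y : X) :
  re (hinner x y) ^ 2 <= n2 x * n2 y.
Proof.
  set (r := re (hinner x y)).
  destruct (Req_dec (n2 y) 0) as [Hy|Hy].
  - apply hinner_def in Hy. subst r. subst y. unfold n2. rewrite !inner_zero_r. simpl.
    nra.
  - pose proof (n2_pos (hadd (sc (n2 y) x) (sc (-r) y))) as P.
    rewrite n2_add, !n2_sc, re_sc_l, re_sc_r in P. fold r in P.
    pose proof (n2_pos y). pose proof (n2_pos x).
    assert (0 < n2 y) by lra.
    assert (0 <= n2 y * (n2 x * n2 y - r^2)) by nra.
    nra.
Qed.

Lemma CS_sq {X : HilbertSpace} (x y : X) :
  re (hinner x y) ^ 2 + im (hinner x y) ^ 2 <= n2 x * n2 y.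
Proof.
  set (c := hinner x y). set (m := re c ^ 2 + im c ^ 2).
  pose proof (CS_re x (hscal c y)) as P.
  rewrite inner_scalr, n2_scal in P. fold c m in P. simpl in P.
  replace (re c * re c - - im c * im c) with m in P by (unfold m; ring).
  pose proof (n2_pos x). pose proof (n2_pos y).
  assert (0 <= m) by (unfold m; nra).
  destruct (Req_dec m 0) as [E|E]. { rewrite E. nra. }
  assert (0 < m) by lra.
  nra.
Qed.

Lemma hnorm_n2 {X : HilbertSpace} (x : X) : hnorm x = sqrt (n2 x).
Proof. reflexivity. Qed.

Lemma Cmod_CS {X : HilbertSpace} (x y : X) :
  Cmod (hinner x y) <= hnorm x * hnorm y.
Proof.
  unfold Cmod, hnorm. fold (n2 x) (n2 y).
  rewrite <- sqrt_mult by apply n2_pos.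
  apply sqrt_le_1_alt. apply CS_sq.
Qed.

Lemma Rabs_re_Cmod (c : Cplx) : Rabs (re c) <= Cmod c.
Proof.
  unfold Cmod. rewrite <- sqrt_Rsqr_abs. apply sqrt_le_1_alt. unfold Rsqr. nra.
Qed.

Lemma Rabs_im_Cmod (c : Cplx) : Rabs (im c) <= Cmod c.
Proof.
  unfold Cmod. rewrite <- sqrt_Rsqr_abs. apply sqrt_le_1_alt. unfold Rsqr. nra.
Qed.

Lemma Cmod_pos (c : Cplx) : 0 <= Cmod c.
Proof. apply sqrt_pos. Qed.

Lemma Cmod_sq (c : Cplx) : Cmod c ^ 2 = re c ^ 2 + im c ^ 2.
Proof. unfold Cmod. rewrite pow2_sqrt; [reflexivity| nra]. Qed.

Lemma Rsup_lub (E : R -> Prop) : (exists l, is_lub E l) -> is_lub E (Rsup E).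
Proof.
  intro h. unfold Rsup. destruct excluded_middle_informative as [h'|h'].
  - destruct (constructive_indefinite_description _ h'). simpl. auto.
  - contradiction.
Qed.

Lemma Rsup_ub (E : R -> Prop) M : (forall r, E r -> r <= M) -> forall r, E r -> r <= Rsup E.
Proof.
  intros HM r Er.
  destruct (completeness E) as [l Hl]. { exists M. intros x Hx. auto. } { eauto. }
  pose proof (Rsup_lub E (ex_intro _ l Hl)) as [U _]. apply U; auto.
Qed.

Lemma Rsup_le (E : R -> Prop) K : (forall r, E r -> r <= K) -> 0 <= K -> Rsup E <= K.
Proof.
  intros HK K0. unfold Rsup. destruct excluded_middle_informative as [h'|h'].
  - destruct (constructive_indefinite_description _ h') as [l [U L]]. simpl.
    apply L. intros x Hx. auto.
  - lra.
Qed.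

Lemma Rsup_nonneg (E : R -> Prop) : (forall r, E r -> 0 <= r) -> 0 <= Rsup E.
Proof.
  intros HE. unfold Rsup. destruct excluded_middle_informative as [h'|h'].
  - destruct (constructive_indefinite_description _ h') as [l [U L]]. simpl.
    destruct (classic (exists r, E r)) as [[r Er]|NE].
    + specialize (U r Er). specialize (HE r Er). lra.
    + assert (l <= l - 1). { apply L. intros x Hx. exfalso. apply NE. eauto. } lra.
  - lra.
Qed.

Lemma self_add_zero {X : HilbertSpace} (z : X) : z = hadd z z -> z = hzero.
Proof.
  intro E. rewrite <- (hadd_opp X z). rewrite E at 2. rewrite <- hadd_assoc, hadd_opp.
  rewrite hadd_comm, hadd_0. reflexivity.
Qed.

Lemma lin_zero {X : HilbertSpace} (A : X -> X) : is_linear A -> A hzero = hzero.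
Proof.
  intros [Ad _]. apply self_add_zero. rewrite <- Ad, hadd_0. reflexivity.
Qed.

Lemma lin_sc {X : HilbertSpace} (A : X -> X) r x : is_linear A -> A (sc r x) = sc r (A x).
Proof. intros [_ As]. apply As. Qed.

Lemma n2_zero {X : HilbertSpace} : n2 (@hzero X) = 0.
Proof. unfold n2. rewrite inner_zero_r. reflexivity. Qed.

Lemma hnorm_sc {X : HilbertSpace} r (x : X) : hnorm (sc r x) = Rabs r * hnorm x.
Proof.
  unfold hnorm. fold (n2 (sc r x)) (n2 x). rewrite n2_sc.
  rewrite sqrt_mult_alt by (apply pow2_ge_0). rewrite <- sqrt_Rsqr_abs. unfold Rsqr. f_equal. f_equal. ring.
Qed.

Lemma hnorm_pos {X : HilbertSpace} (x : X) : 0 <= hnorm x.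
Proof. apply sqrt_pos. Qed.

Lemma hnorm_sq {X : HilbertSpace} (x : X) : hnorm x ^ 2 = n2 x.
Proof. unfold hnorm. rewrite pow2_sqrt; [reflexivity | apply n2_pos]. Qed.

Lemma normalize {X : HilbertSpace} (x : X) : 0 < n2 x ->
  let s := hnorm x in 0 < s /\ n2 (sc (1/s) x) = 1 /\ hnorm (sc (1/s) x) = 1.
Proof.
  intros P s.
  assert (S0 : 0 < s) by (apply sqrt_lt_R0; auto).
  assert (N1 : n2 (sc (1/s) x) = 1).
  { rewrite n2_sc, <- (hnorm_sq x). fold s. field. lra. }
  split; [auto|split; auto]. unfold hnorm. fold (n2 (sc (1/s) x)). rewrite N1. apply sqrt_1.
Qed.

Lemma opnorm_nonneg {X : HilbertSpace} (T : X -> X) : 0 <= opnorm T.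
Proof. apply Rsup_nonneg. intros r [x [_ ->]]. apply hnorm_pos. Qed.

Lemma opnorm_prop {X : HilbertSpace} (T : X -> X) : is_bounded T ->
  forall x, hnorm (T x) <= opnorm T * hnorm x.
Proof.
  intros [Tl [M HM]] x.
  assert (UB : forall x, hnorm x <= 1 -> hnorm (T x) <= opnorm T).
  { intros y Hy. unfold opnorm. apply (Rsup_ub _ (Rabs M)).
    - intros r [z [Hz ->]]. specialize (HM z). pose proof (hnorm_pos z).
      pose proof (Rle_abs M). pose proof (Rabs_pos M). nra.
    - eauto. }
  pose proof (n2_pos x) as P. pose proof (opnorm_nonneg T).
  destruct (Req_dec (n2 x) 0) as [E|E].
  - apply hinner_def in E. subst x. rewrite lin_zero by auto.
    unfold hnorm. fold (n2 (@hzero X)). rewrite n2_zero, sqrt_0. lra.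
  - destruct (normalize x) as [S0 [_ N1]]; [lra|].
    set (s := hnorm x) in *.
    specialize (UB _ (Req_le _ _ N1)). rewrite lin_sc, hnorm_sc in UB by auto.
    rewrite Rabs_right in UB by (apply Rle_ge; apply Rlt_le; apply Rdiv_lt_0_compat; lra).
    pose proof (hnorm_pos (T x)).
    apply (Rmult_le_compat_l s) in UB; [|lra].
    replace (s * (1 / s * hnorm (T x))) with (hnorm (T x)) in UB by (field; lra). lra.
Qed.

Lemma inner_sc_sc {X : HilbertSpace} a (u v : X) :
  hinner (sc a u) (sc a v) = Cmul (RtoC (a ^ 2)) (hinner u v).
Proof. unfold sc. rewrite hinner_scall, inner_scalr. apply Ceq; simpl; ring. Qed.

Lemma Cmod_Rmul b c : 0 <= b -> Cmod (Cmul (RtoC b) c) = b * Cmod c.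
Proof.
  intro B. unfold Cmod. cbn [re im Cmul RtoC].
  replace ((b * re c - 0 * im c) ^ 2 + (b * im c + 0 * re c) ^ 2) with
    (b ^ 2 * (re c ^ 2 + im c ^ 2)) by ring.
  rewrite sqrt_mult_alt by apply pow2_ge_0. rewrite sqrt_pow2 by auto. reflexivity.
Qed.

Lemma numrad_nonneg {X : HilbertSpace} (T : X -> X) : 0 <= numrad T.
Proof. apply Rsup_nonneg. intros r [x [_ ->]]. apply Cmod_pos. Qed.

Lemma numrad_prop {X : HilbertSpace} (T : X -> X) : is_bounded T ->
  (exists u : X, hnorm u = 1) ->
  forall z, Cmod (hinner (T z) z) <= numrad T * n2 z.
Proof.
  intros [Tl [M HM]] [u Hu] z.
  assert (UB : forall y, hnorm y = 1 -> Cmod (hinner (T y) y) <= numrad T).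
  { intros y Hy. unfold numrad. apply (Rsup_ub _ (Rabs M)).
    - intros r [w [Hw ->]]. pose proof (Cmod_CS (T w) w). rewrite Hw in *.
      specialize (HM w). rewrite Hw in HM. pose proof (Rle_abs M). lra.
    - eauto. }
  pose proof (n2_pos z) as P. pose proof (numrad_nonneg T).
  destruct (Req_dec (n2 z) 0) as [E|E].
  - apply hinner_def in E. subst z. rewrite lin_zero by auto.
    rewrite inner_zero_r, n2_zero. unfold Cmod; cbn [re im C0].
    replace (0 ^ 2 + 0 ^ 2) with 0 by ring. rewrite sqrt_0. lra.
  - destruct (normalize z) as [S0 [N1 N2]]; [lra|].
    set (s := hnorm z) in *.
    specialize (UB _ N2). rewrite lin_sc, inner_sc_sc, Cmod_Rmul in UB by (auto; apply pow2_ge_0).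
    rewrite <- (hnorm_sq z). fold s.
    pose proof (Cmod_pos (hinner (T z) z)).
    apply (Rmult_le_compat_l (s^2)) in UB; [|nra].
    replace (s ^ 2 * ((1 / s) ^ 2 * Cmod (hinner (T z) z))) with (Cmod (hinner (T z) z)) in UB
      by (field; lra). lra.
Qed.

Lemma polar {X : HilbertSpace} (T : X -> X) (w : R) : is_linear T ->
  (forall x y, re (hinner (T x) y) = re (hinner (T y) x)) ->
  (forall z, Rabs (re (hinner (T z) z)) <= w * n2 z) -> 0 <= w ->
  forall x, n2 (T x) <= w ^ 2 * n2 x.
Proof.
  intros Tl Sym Bd W x.
  assert (Exp : forall u v, re (hinner (T (hadd u v)) (hadd u v)) =
     re (hinner (T u) u) + 2 * re (hinner (T u) v) + re (hinner (T v) v)).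
  { intros u v. destruct Tl as [Ad _]. rewrite Ad, re_addl, !re_addr.
    rewrite (Sym v u). ring. }
  assert (G : forall u v, 4 * re (hinner (T u) v) <= 2 * w * (n2 u + n2 v)).
  { intros u v.
    pose proof (Exp u v) as E1. pose proof (Exp u (sc (-1) v)) as E2.
    rewrite (lin_sc T) in E2 by auto. rewrite re_sc_r, re_sc_l, re_sc_r in E2.
    pose proof (Bd (hadd u v)) as B1. pose proof (Bd (hadd u (sc (-1) v))) as B2.
    rewrite n2_add in B1, B2. rewrite re_sc_r, n2_sc in B2.
    pose proof (Rle_abs (re (hinner (T (hadd u v)) (hadd u v)))).
    pose proof (Rle_abs (- re (hinner (T (hadd u (sc (-1) v))) (hadd u (sc (-1) v))))).
    rewrite Rabs_Ropp in H0. nra. }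
  pose proof (n2_pos x). pose proof (n2_pos (T x)).
  destruct (Req_dec w 0) as [W0|W0].
  - specialize (G x (T x)). fold (n2 (T x)) in G. subst w. nra.
  - specialize (G (sc w x) (T x)). rewrite (lin_sc T) in G by auto.
    rewrite re_sc_l, n2_sc in G. fold (n2 (T x)) in G.
    assert (0 < w) by lra.
    assert (w * (n2 (T x) - w^2 * n2 x) <= 0) by nra.
    nra.
Qed.

Lemma adj_swap {X : HilbertSpace} (A As : X -> X) : is_adjoint A As ->
  forall x y, hinner (As x) y = hinner x (A y).
Proof.
  intros Ad x y. rewrite (hinner_sym X y (As x)), <- Ad, (hinner_sym X x (A y)).
  apply Ceq; simpl; ring.
Qed.

Lemma inner_ext {X : HilbertSpace} (u v : X) : (forall z, hinner z u = hinner z v) -> u = v.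
Proof.
  intro E. set (d := hadd u (sc (-1) v)).
  assert (D0 : d = hzero).
  { apply hinner_def. unfold d at 2. rewrite re_addr, re_sc_r, E. ring. }
  assert (V : hadd (sc (-1) v) v = hzero).
  { unfold sc. rewrite <- (hscal_1 X v) at 2. rewrite <- hscal_addl, <- (scal_zero v).
    f_equal. apply Ceq; simpl; lra. }
  assert (U : u = hadd d v).
  { unfold d. rewrite <- hadd_assoc, V, hadd_comm, hadd_0. reflexivity. }
  rewrite U, D0, hadd_0. reflexivity.
Qed.

Lemma adj_linear {X : HilbertSpace} (A As : X -> X) : is_adjoint A As -> is_linear As.
Proof.
  intro Ad. split.
  - intros x y. apply inner_ext. intro z. rewrite <- Ad, !inner_addr, <- !Ad. reflexivity.
  - intros a x. apply inner_ext. intro z. rewrite <- Ad, !inner_scalr, <- Ad. reflexivity.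
Qed.

Lemma hadd_shuffle {X : HilbertSpace} (a b c d : X) :
  hadd (hadd a b) (hadd c d) = hadd (hadd a c) (hadd b d).
Proof.
  rewrite !hadd_assoc. f_equal. rewrite <- !hadd_assoc. f_equal. apply hadd_comm.
Qed.

Lemma scal_comm {X : HilbertSpace} a c (u : X) : hscal a (hscal c u) = hscal c (hscal a u).
Proof. rewrite !hscal_assoc. f_equal. apply Ceq; simpl; ring. Qed.

Lemma lin_comb {X : HilbertSpace} (L1 L2 : X -> X) c : is_linear L1 -> is_linear L2 ->
  is_linear (fun x => hscal c (hadd (L1 x) (L2 x))).
Proof.
  intros [A1 S1] [A2 S2]. split.
  - intros x y. rewrite A1, A2, <- hscal_addr, hadd_shuffle. reflexivity.
  - intros a x. rewrite S1, S2, <- hscal_addr, scal_comm. reflexivity.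
Qed.

Lemma lin_scl {X : HilbertSpace} (L : X -> X) c : is_linear L -> is_linear (fun x => hscal c (L x)).
Proof.
  intros [A1 S1]. split.
  - intros x y. rewrite A1, hscal_addr. reflexivity.
  - intros a x. rewrite S1, scal_comm. reflexivity.
Qed.

Lemma lin_ext {X : HilbertSpace} (f g : X -> X) : (forall x, f x = g x) -> is_linear f -> is_linear g.
Proof.
  intros E [A1 S1]. split; intros; rewrite <- !E; auto.
Qed.

Lemma im_sc_l {X : HilbertSpace} r (u v : X) :
  im (hinner (sc r u) v) = r * im (hinner u v).
Proof. unfold sc. rewrite hinner_scall. simpl. ring. Qed.


Lemma re_part_re {X : HilbertSpace} (A As : X -> X) x y :
  re (hinner (re_part A As x) y) = 1/2 * (re (hinner (A x) y) + re (hinner (As x) y)).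
Proof. unfold re_part. rewrite re_scall, re_addl. simpl. ring. Qed.

Lemma im_part_re {X : HilbertSpace} (A As : X -> X) x y :
  re (hinner (im_part A As x) y) = 1/2 * (im (hinner (A x) y) - im (hinner (As x) y)).
Proof. unfold im_part. rewrite re_scall, opp_sc, im_addl, im_sc_l. simpl. ring. Qed.

Lemma re_part_lin {X : HilbertSpace} (A As : X -> X) : is_linear A -> is_adjoint A As ->
  is_linear (re_part A As).
Proof. intros L Ad. apply lin_comb; auto. eapply adj_linear; eauto. Qed.

Lemma im_part_lin {X : HilbertSpace} (A As : X -> X) : is_linear A -> is_adjoint A As ->
  is_linear (im_part A As).
Proof.
  intros L Ad. apply (lin_ext (fun x => hscal (mkC 0 (-(1/2))) (hadd (A x) (sc (-1) (As x))))).
  - intro x. unfold im_part. rewrite opp_sc. reflexivity.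
  - apply lin_comb; auto. apply lin_scl. eapply adj_linear; eauto.
Qed.

Lemma n2_parts {X : HilbertSpace} (A As : X -> X) x :
  n2 (A x) + n2 (As x) = 2 * n2 (re_part A As x) + 2 * n2 (im_part A As x).
Proof.
  unfold re_part, im_part. rewrite !n2_scal, opp_sc, !n2_add, re_sc_r, n2_sc. cbn [re im RtoC]. field.
Qed.

Lemma adj_re1 {X : HilbertSpace} (A As : X -> X) : is_adjoint A As -> forall x y,
  re (hinner (A x) y) = re (hinner (As y) x).
Proof. intros Ad x y. rewrite Ad. apply re_sym. Qed.
Lemma adj_re2 {X : HilbertSpace} (A As : X -> X) : is_adjoint A As -> forall x y,
  re (hinner (As x) y) = re (hinner (A y) x).
Proof. intros Ad x y. rewrite (adj_swap A As Ad). apply re_sym. Qed.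
Lemma adj_im1 {X : HilbertSpace} (A As : X -> X) : is_adjoint A As -> forall x y,
  im (hinner (A x) y) = - im (hinner (As y) x).
Proof. intros Ad x y. rewrite Ad. apply im_sym. Qed.
Lemma adj_im2 {X : HilbertSpace} (A As : X -> X) : is_adjoint A As -> forall x y,
  im (hinner (As x) y) = - im (hinner (A y) x).
Proof. intros Ad x y. rewrite (adj_swap A As Ad). apply im_sym. Qed.

Lemma key {X : HilbertSpace} (A As Ai : X -> X) :
  is_bounded A -> is_adjoint A As -> is_inverse A Ai ->
  Dfun A As <= / (opnorm Ai ^ 2) -> (exists u : X, hnorm u = 1) ->
  forall x, n2 (A x) <= 2 * numrad A ^ 2 * n2 x.
Proof.
  intros Ab Ad Ainv D U.
  set (w := numrad A).
  assert (W0 : 0 <= w) by apply numrad_nonneg.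
  assert (Wp : forall z, Cmod (hinner (A z) z) <= w * n2 z) by (apply numrad_prop; auto).
  destruct Ab as [Al Ab'].
  assert (P1 : forall x, n2 (re_part A As x) <= w ^ 2 * n2 x).
  { apply polar; auto.
    - apply re_part_lin; auto.
    - intros x y. rewrite !re_part_re, (adj_re1 A As Ad x y), (adj_re2 A As Ad x y). ring.
    - intro z. rewrite re_part_re, (adj_re2 A As Ad z z).
      replace (1 / 2 * (re (hinner (A z) z) + re (hinner (A z) z))) with (re (hinner (A z) z)) by field.
      pose proof (Rabs_re_Cmod (hinner (A z) z)). pose proof (Wp z). lra. }
  assert (P2 : forall x, n2 (im_part A As x) <= w ^ 2 * n2 x).
  { apply polar; auto.
    - apply im_part_lin; auto.
    - intros x y. rewrite !im_part_re, (adj_im1 A As Ad x y), (adj_im2 A As Ad x y). ring.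
    - intro z. rewrite im_part_re, (adj_im2 A As Ad z z).
      replace (1 / 2 * (im (hinner (A z) z) - - im (hinner (A z) z))) with (im (hinner (A z) z)) by field.
      pose proof (Rabs_im_Cmod (hinner (A z) z)). pose proof (Wp z). lra. }
  assert (Bd : forall T : X -> X, is_linear T -> (forall x, n2 (T x) <= w ^ 2 * n2 x) -> is_bounded T).
  { intros T Tl HT. split; auto. exists w. intro x. unfold hnorm. fold (n2 (T x)) (n2 x).
    rewrite <- (sqrt_pow2 w W0). rewrite <- sqrt_mult_alt by apply pow2_ge_0.
    apply sqrt_le_1_alt. apply HT. }
  assert (B1 : is_bounded (re_part A As)) by (apply Bd; auto; apply re_part_lin; auto).
  assert (B2 : is_bounded (im_part A As)) by (apply Bd; auto; apply im_part_lin; auto).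
  set (N := opnorm Ai).
  assert (N0 : 0 <= N) by apply opnorm_nonneg.
  destruct Ainv as [Aib [AAi AiA]].
  assert (Inv : forall x, n2 x <= N ^ 2 * n2 (As x)).
  { intro x.
    assert (E : n2 x = re (hinner (Ai x) (As x))).
    { unfold n2. rewrite <- Ad, AAi. reflexivity. }
    pose proof (Rabs_re_Cmod (hinner (Ai x) (As x))).
    pose proof (Cmod_CS (Ai x) (As x)).
    pose proof (opnorm_prop Ai Aib x). fold N in H1.
    pose proof (hnorm_pos (As x)). pose proof (hnorm_pos x). pose proof (hnorm_pos (Ai x)).
    pose proof (Rle_abs (re (hinner (Ai x) (As x)))).
    assert (n2 x <= N * hnorm x * hnorm (As x)) by nra.
    rewrite <- (hnorm_sq x), <- (hnorm_sq (As x)) in *.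
    destruct (Req_dec (hnorm x) 0) as [Z|Z]. { rewrite Z. nra. }
    assert (0 < hnorm x) by lra.
    assert (hnorm x <= N * hnorm (As x)) by nra.
    nra. }
  assert (Step : forall (T1 T2 : X -> X), is_bounded T1 ->
      (forall x, n2 (A x) + n2 (As x) = 2 * n2 (T1 x) + 2 * n2 (T2 x)) ->
      (forall x, n2 (T2 x) <= w ^ 2 * n2 x) ->
      2 * opnorm T1 ^ 2 <= / N ^ 2 -> forall x, n2 (A x) <= 2 * w ^ 2 * n2 x).
  { intros T1 T2 TB Id HT2 Hd x.
    pose proof (opnorm_prop T1 TB x) as O. pose proof (opnorm_nonneg T1).
    pose proof (hnorm_pos (T1 x)). pose proof (hnorm_pos x).
    assert (O2 : n2 (T1 x) <= opnorm T1 ^ 2 * n2 x).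
    { rewrite <- (hnorm_sq x), <- (hnorm_sq (T1 x)). nra. }
    assert (Q : 2 * n2 (T1 x) <= n2 (As x)).
    { pose proof (n2_pos x). pose proof (n2_pos (As x)). pose proof (Inv x).
      destruct (Req_dec N 0) as [Z|Z].
      - rewrite Z in Hd. replace (0 ^ 2) with 0 in Hd by ring. rewrite Rinv_0 in Hd.
        pose proof (n2_pos (T1 x)). nra.
      - assert (0 < N ^ 2) by (apply pow_lt; lra).
        assert (2 * n2 (T1 x) <= / N ^ 2 * n2 x) by nra.
        assert (/ N ^ 2 * n2 x <= / N ^ 2 * (N ^ 2 * n2 (As x))).
        { apply Rmult_le_compat_l; [apply Rlt_le, Rinv_0_lt_compat; auto | auto]. }
        replace (/ N ^ 2 * (N ^ 2 * n2 (As x))) with (n2 (As x)) in H7 by (field; auto).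
        lra. }
    pose proof (Id x). pose proof (HT2 x). lra. }
  unfold Dfun in D. fold N in D.
  unfold Rmin in D. destruct (Rle_dec _ _).
  - apply (Step (re_part A As) (im_part A As)); auto; try apply n2_parts; try lra.
  - apply (Step (im_part A As) (re_part A As)); auto; try lra.
    intro x. rewrite n2_parts. ring.
Qed.

Theorem corollary2p3 (H : HilbertSpace) (A B Astar Bstar Ainv Binv : H -> H) :
  is_bounded A -> is_bounded B ->
  is_adjoint A Astar -> is_adjoint B Bstar ->
  is_inverse A Ainv -> is_inverse B Binv ->
  Dfun A Astar <= / (opnorm Ainv ^ 2) ->
  Dfun B Bstar <= / (opnorm Binv ^ 2) ->
  numrad (opcomp A B) <= 2 * numrad A * numrad B.
Proof.
  intros Ab Bb Aa Ba Ai Bi DA DB.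
  pose proof (numrad_nonneg A) as WA. pose proof (numrad_nonneg B) as WB.
  apply Rsup_le; [| nra].
  intros r [x [Hx ->]].
  assert (U : exists u : H, hnorm u = 1) by eauto.
  pose proof (key A Astar Ainv Ab Aa Ai DA U (B x)) as KA.
  pose proof (key B Bstar Binv Bb Ba Bi DB U x) as KB.
  assert (N1 : n2 x = 1). { rewrite <- hnorm_sq, Hx. ring. }
  pose proof (Cmod_CS (opcomp A B x) x) as C. rewrite Hx, Rmult_1_r in C.
  unfold opcomp in *.
  assert (n2 (A (B x)) <= (2 * numrad A * numrad B) ^ 2).
  { rewrite N1 in KB. pose proof (n2_pos (B x)). nra. }
  unfold hnorm in C. fold (n2 (A (B x))) in C.
  rewrite <- (sqrt_pow2 (2 * numrad A * numrad B)) by nra.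
  eapply Rle_trans; [exact C|]. apply sqrt_le_1_alt. auto.
Qed.
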